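(* Let $d\geq3$ and $h\geq 3$. Then \[ \nu_2(T(d,h))=\frac{2\big((d-1)^h-1\big)}{d-2}. \]
   Context: $T(d,h)$ is the $d$-regular tree of depth $h$: a rooted tree in which the root has $d$ children, every other vertex at depth less than $h$ has $d-1$ children, and all leaves are at depth $h$. A $2$-matching of a graph is a set of edges such that every vertex is incident to at most two of them; $\nu_2(G)$ is the maximum size of a $2$-matching of $G$. *)

(* Defs.v *)
From mathcomp Require Import all_boot.
Set Implicit Arguments. Unset Strict Implicit. Unset Printing Implicit Defensive.

Definition edges (V : finType) (e : rel V) : {set {set V}} :=
  [set [set p.1; p.2] | p : V * V & e p.1 p.2].

Definition is_2matching (V : finType) (e : rel V) (M : {set {set V}}) : bool :=
  (M \subset edges e) && [forall x : V, #|[set f in M | x \in f]| <= 2].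

Definition nu2 (V : finType) (e : rel V) : nat :=
  \max_(M : {set {set V}} | is_2matching e M) #|M|.

(* Vertices are words (paths from the root): the root is [::]; the children
   of a word s are the words rcons s x.  The first letter ranges over
   0..d-1 (the root has d children), later letters over 0..d-2 (every other
   non-leaf vertex has d-1 children), and words have length <= h
   (the leaves are exactly the words of length h). *)

Fixpoint words (d n : nat) : seq (seq nat) :=
  if n is n'.+1 then [:: [::] & [seq x :: s | x <- iota 0 d, s <- words d n']]
  else [:: [::]].

Definition tree_word (d h : nat) (s : seq nat) : bool :=
  (size s <= h) &&
  all (fun i => nth 0 s i < (if i == 0 then d else d - 1)) (iota 0 (size s)).

Definition tree_vertices (d h : nat) : seq (seq nat) :=
  [seq s <- words d h | tree_word d h s].

Definition TV (d h : nat) : finType := seq_sub (tree_vertices d h).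

Definition parent (s t : seq nat) : bool :=
  (size t == (size s).+1) && (take (size s) t == s).

Definition tree_adj (d h : nat) : rel (TV d h) :=
  fun u v => parent (ssval u) (ssval v) || parent (ssval v) (ssval u).
Arguments tree_adj d h : clear implicits.

(* Main.v *)
Require Import Defs.
From mathcomp Require Import all_boot.
Set Implicit Arguments. Unset Strict Implicit. Unset Printing Implicit Defensive.

Fixpoint Bw (b j : nat) : seq (seq nat) :=
  if j is j'.+1 then [seq y :: t | y <- iota 0 b, t <- Bw b j'] else [:: [::]].
Definition Td d k := if k is k'.+1 then [seq x :: t | x <- iota 0 d, t <- Bw (d-1) k'] else [:: [::]].
Fixpoint AllT d n := if n is n'.+1 then AllT d n' ++ Td d n' else [::].
Definition twp d (s : seq nat) := if s is x :: t then (x < d) && all (fun y => y < d-1) t else true.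

Lemma mem_Bw b j s : (s \in Bw b j) = (size s == j) && all (fun y => y < b) s.
Proof.
elim: j s => [|j IH] [|x t] //=.
  by apply/negbTE/negP => /allpairsP[[y u] [_ _]].
rewrite eqSS; apply/allpairsP/idP => [[[y u] /= [Hy Hu [-> ->]]]|/andP[Hs /andP[Hx Ha]]].
  by move: Hu; rewrite IH mem_iota in Hy *; case/andP => -> ->; rewrite andbT.
by exists (x, t); rewrite /= mem_iota IH Hs Ha.
Qed.

Lemma uniq_Bw b j : uniq (Bw b j).
Proof.
elim: j => [|j IH] //=; apply: allpairs_uniq => //; first exact: iota_uniq.
by move=> [x1 t1] [x2 t2] _ _ /= [-> ->].
Qed.

Lemma size_Bw b j : size (Bw b j) = b ^ j.
Proof. by elim: j => [|j IH] //=; rewrite size_allpairs size_iota IH expnS. Qed.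

Lemma mem_Td d k s : (s \in Td d k) = (size s == k) && twp d s.
Proof.
case: k s => [|k] [|x t] //=.
  by apply/negbTE/negP => /allpairsP[[y u] [_ _]].
rewrite eqSS; apply/allpairsP/idP => [[[y u] /= [Hy Hu [-> ->]]]|/andP[Hs /andP[Hx Ha]]].
  by move: Hu; rewrite mem_Bw mem_iota in Hy *; case/andP => -> ->; rewrite andbT.
by exists (x, t); rewrite /= mem_iota mem_Bw Hs Ha.
Qed.

Lemma uniq_Td d k : uniq (Td d k).
Proof.
case: k => [|k] //=; apply: allpairs_uniq => //; first exact: iota_uniq.
  exact: uniq_Bw.
by move=> [x1 t1] [x2 t2] _ _ /= [-> ->].
Qed.

Lemma size_Td d k : size (Td d k) = if k is k'.+1 then d * (d-1) ^ k' else 1.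
Proof. by case: k => [|k] //=; rewrite size_allpairs size_iota size_Bw. Qed.

Lemma mem_AllT d n s : (s \in AllT d n) = (size s < n) && twp d s.
Proof.
elim: n => [|n IH] //=; rewrite mem_cat IH mem_Td -andb_orl.
by rewrite ltnS [in RHS]leq_eqVlt orbC.
Qed.

Lemma uniq_AllT d n : uniq (AllT d n).
Proof.
elim: n => [|n IH] //=; rewrite cat_uniq IH uniq_Td andbT /=.
apply/hasPn => s; rewrite mem_Td mem_AllT => /andP[/eqP -> _].
by rewrite ltnn.
Qed.

Lemma count_AllT d n a : count a (AllT d n) = \sum_(k < n) count a (Td d k).
Proof. by elim: n => [|n IH]; rewrite ?big_ord0 // big_ord_recr /= count_cat IH. Qed.

Lemma mem_words d n s : (s \in words d n) = (size s <= n) && all (fun y => y < d) s.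
Proof.
elim: n s => [|n IH] [|x t] //=.
rewrite in_cons /= ltnS; apply/allpairsP/idP => [[[y u] /= [Hy Hu [-> ->]]]|/andP[Hs /andP[Hx Ha]]].
  by move: Hu Hy; rewrite IH mem_iota /= => /andP[-> ->] ->.
by exists (x, t); rewrite /= mem_iota IH Hs Ha.
Qed.

Lemma uniq_words d n : uniq (words d n).
Proof.
elim: n => [|n IH] //=; apply/andP; split.
  by apply/allpairsP => -[[y u] /= [_ _]].
apply: allpairs_uniq => //; first exact: iota_uniq.
by move=> [x1 t1] [x2 t2] _ _ /= [-> ->].
Qed.

Lemma tree_wordE d h s : tree_word d h s = (size s <= h) && twp d s.
Proof.
rewrite /tree_word; congr (_ && _); case: s => [|x t] //=.
congr (_ && _).
rewrite -{3}(mkseq_nth 0 t) /mkseq all_map -(addn0 1) iotaDl all_map.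
by apply: eq_all => i /=; rewrite add1n.
Qed.

Lemma twp_all d s : twp d s -> all (fun y => y < d) s.
Proof.
case: s => [|x t] //= /andP[-> H] /=; apply/allP => y Hy.
by have := allP H y Hy; move/leq_trans; apply; rewrite leq_subr.
Qed.

Lemma mem_tv d h s : (s \in tree_vertices d h) = (size s <= h) && twp d s.
Proof.
rewrite mem_filter tree_wordE mem_words.
by case: (size s <= h); case E: (twp d s) => //=; rewrite twp_all.
Qed.

Lemma uniq_tv d h : uniq (tree_vertices d h).
Proof. exact/filter_uniq/uniq_words. Qed.

Lemma perm_tv d h : perm_eq (tree_vertices d h) (AllT d h.+1).
Proof.
apply: uniq_perm; [exact: uniq_tv | exact: uniq_AllT |].
by move=> s; rewrite mem_tv mem_AllT ltnS.
Qed.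
Lemma card_ss (T : choiceType) (s : seq T) (P : pred T) : uniq s ->
  #|[set u : seq_sub s | P (ssval u)]| = count P s.
Proof.
move=> Us; rewrite cardE /enum_mem size_filter.
have -> : Finite.enum (seq_sub s) = seq_sub_enum s by rewrite unlock.
transitivity (count P (map val (seq_sub_enum s))).
  by rewrite count_map; apply: eq_count => u; rewrite !inE.
by rewrite val_seq_sub_enum.
Qed.
Definition cc d k := if k is k'.+1 then d * (d-1) ^ k' else 1.

Lemma sum_alt d h : 0 < d ->
  \sum_(k < h.+1) odd (h - k) * cc d k = \sum_(i < h) (d-1) ^ i.
Proof.
move=> d0.
suff H : forall h, (\sum_(k < h.+1) odd (h - k) * cc d k = \sum_(i < h) (d-1) ^ i) /\
   (\sum_(k < h.+2) odd (h.+1 - k) * cc d k = \sum_(i < h.+1) (d-1) ^ i).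
  by case: (H h).
elim=> [|n [IH1 IH2]]; first by rewrite !big_ord_recr !big_ord0.
split=> //.
rewrite big_ord_recr big_ord_recr /= subnn subSnn /=.
rewrite [in RHS]big_ord_recr big_ord_recr /= -IH1.
rewrite mul0n mul1n addn0 -addnA; congr (_ + _).
  apply: eq_bigr => k _; have hk : k <= n by rewrite -ltnS.
  by rewrite (subSn (leqW hk)) (subSn hk) /= negbK.
have -> : d * (d - 1) ^ n = (d - 1).+1 * (d - 1) ^ n by rewrite subn1 prednK.
by rewrite mulSn expnS.
Qed.

Lemma count_Td d k a : count (fun s : seq nat => a (size s)) (Td d k) = a k * cc d k.
Proof.
rewrite (@eq_in_count _ _ (fun _ => a k)); last first.
  by move=> s; rewrite mem_Td => /andP[/eqP -> _].
by case: (a k); rewrite ?count_predT ?count_pred0 ?size_Td ?mul1n.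
Qed.

Lemma card_L d h : 0 < d ->
  #|[set u : TV d h | odd (h - size (ssval u))]| = \sum_(i < h) (d-1) ^ i.
Proof.
move=> d0; rewrite /TV (card_ss (fun s => odd (h - size s)) (uniq_tv d h)).
rewrite (permP (perm_tv d h)) count_AllT -sum_alt //.
by apply: eq_bigr => k _; rewrite (count_Td d k (fun m => odd (h - m))).
Qed.

Lemma cardS (T : finType) (A : {set T}) (P : pred T) :
  #|[set v in A | P v]| = \sum_(v in A) (P v : nat).
Proof.
rewrite -sum1_card big_mkcond [RHS]big_mkcond /=; apply: eq_bigr => v _.
by rewrite inE; case: (v \in A); case: (P v).
Qed.

Lemma dcount (T : finType) (M : {set {set T}}) (L : {set T}) :
  \sum_(f in M) #|[set v in L | v \in f]| = \sum_(v in L) #|[set f in M | v \in f]|.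
Proof.
under eq_bigr => f _ do rewrite cardS.
rewrite exchange_big /=; apply: eq_bigr => v _; by rewrite cardS.
Qed.

Lemma xor_card (T : finType) (L : {set T}) a b : (a \in L) != (b \in L) ->
  #|[set v in L | v \in [set a; b]]| = 1.
Proof.
case Ha: (a \in L); case Hb: (b \in L) => // _.
  apply: (eq_card1 (x := a)) => v; rewrite !inE.
  by case: (v =P a) => [->|_]; rewrite ?Ha //=; case: (v =P b) => [->|_]; rewrite ?Hb ?andbF.
apply: (eq_card1 (x := b)) => v; rewrite !inE.
by case: (v =P b) => [->|_]; rewrite ?Hb ?orbT //=; case: (v =P a) => [->|_]; rewrite ?Ha ?andbF.
Qed.

Section Tree.
Variables d h : nat.
Hypothesis d3 : 3 <= d.
Local Notation V := (TV d h).

Definition Lset : {set V} := [set u : V | odd (h - size (ssval u))].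

Lemma vert_tv (u : V) : (size (ssval u) <= h) && twp d (ssval u).
Proof. by rewrite -mem_tv; exact: (ssvalP u). Qed.

Lemma vert_size (u : V) : size (ssval u) <= h.
Proof. by case/andP: (vert_tv u). Qed.

Lemma par_L (u w : V) : parent (ssval u) (ssval w) -> (u \in Lset) = ~~ (w \in Lset).
Proof.
case/andP => /eqP Hs _; rewrite !inE; have := vert_size w; rewrite Hs => Hle.
by rewrite -(subnSK Hle).
Qed.

Lemma edge_L f : f \in edges (tree_adj d h) -> #|[set v in Lset | v \in f]| = 1.
Proof.
case/imsetP => -[a b]; rewrite inE /= /tree_adj => /orP[] Hp ->; apply: xor_card.
  by rewrite (par_L Hp); case: (b \in Lset).
by rewrite (par_L Hp); case: (a \in Lset).
Qed.

Lemma ub (M : {set {set V}}) : is_2matching (tree_adj d h) M -> #|M| <= 2 * #|Lset|.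
Proof.
case/andP => /subsetP Msub /forallP deg.
rewrite -sum1_card.
under eq_bigr => f fM do rewrite -(edge_L (Msub f fM)).
rewrite dcount mulnC -sum_nat_const; apply: leq_sum => v _; exact: deg.
Qed.


Definition good (u w : V) := [&& u \in Lset, parent (ssval u) (ssval w) & last 0 (ssval w) < 2].
Definition M0 : {set {set V}} := [set [set p.1; p.2] | p : V * V & good p.1 p.2].

Lemma M0_sub : M0 \subset edges (tree_adj d h).
Proof.
apply/subsetP => f /imsetP[[u w]]; rewrite inE /= => /and3P[_ Hp _] ->.
by apply/imsetP; exists (u, w) => //; rewrite inE /tree_adj /= Hp.
Qed.

Lemma parentE s t : parent s t -> t = rcons s (last 0 t).
Proof.
case/andP => /eqP Hs /eqP Ht; move: Hs Ht; case/lastP: t => [//|t y].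
rewrite size_rcons => -[Hs]; rewrite -cats1 take_size_cat // => ->.
by rewrite cats1 last_rcons.
Qed.

Lemma child_ex (v : V) x : v \in Lset -> x < 2 -> {w : V | ssval w = rcons (ssval v) x}.
Proof.
move=> vL x2.
have H : rcons (ssval v) x \in tree_vertices d h.
  rewrite mem_tv size_rcons; case/andP: (vert_tv v) => _ Ht.
  move: vL; rewrite inE => /odd_gt0; rewrite subn_gt0 => -> /=.
  move: Ht; case: (ssval v) => [|y t] /=.
    by move=> _; rewrite (leq_trans x2) // ltnW // ltnW.
  case/andP => -> Ha /=; rewrite all_rcons Ha andbT.
  by rewrite (leq_trans x2) // ltn_subRL addn1.
by exists (SeqSub H).
Qed.

Lemma deg_in (v : V) : v \in Lset -> #|[set f in M0 | v \in f]| = 2.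
Proof.
move=> vL.
case: (child_ex (x:=0) vL isT) => w0 H0; case: (child_ex (x:=1) vL isT) => w1 H1.
have -> : [set f in M0 | v \in f] = [set [set v; w0]; [set v; w1]].
  apply/setP => f; rewrite !inE; apply/andP/orP.
    case => /imsetP[[u w]]; rewrite inE /= => /and3P[uL Hp Hl] -> /set2P[] vE.
      subst u; move/parentE: Hp => Hw.
      move: Hl; rewrite Hw last_rcons; case: (last 0 (ssval w)) Hw => [|[|//]] Hw _.
        by left; apply/eqP; congr [set _; _]; apply: val_inj; rewrite /= Hw H0.
      by right; apply/eqP; congr [set _; _]; apply: val_inj; rewrite /= Hw H1.
    by subst w; move: uL; rewrite (par_L Hp) vL.
  case=> /eqP ->; rewrite set21; split => //; apply/imsetP.
    exists (v, w0) => //; rewrite inE /good /= vL H0 last_rcons /parent size_rcons eqxx /=.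
    by rewrite -cats1 take_size_cat // eqxx.
  exists (v, w1) => //; rewrite inE /good /= vL H1 last_rcons /parent size_rcons eqxx /=.
  by rewrite -cats1 take_size_cat // eqxx.
rewrite cards2 (_ : [set v; w0] != [set v; w1]) //; apply/eqP => E.
have : w0 \in [set v; w1] by rewrite -E set22.
case/set2P => E2.
  by move: (f_equal (fun u : V => size (ssval u)) E2); rewrite /= H0 size_rcons => /esym /n_Sn.
by move: (f_equal (fun u : V => last 0 (ssval u)) E2); rewrite /= H0 H1 !last_rcons.
Qed.

Lemma deg_out (v : V) : v \notin Lset -> #|[set f in M0 | v \in f]| <= 1.
Proof.
move=> vL.
have key : forall f, f \in [set f in M0 | v \in f] ->
    exists u : V, f = [set u; v] /\ ssval u = take (size (ssval v)).-1 (ssval v).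
  move=> f; rewrite inE => /andP[/imsetP[[u w]]]; rewrite inE /= => /and3P[uL Hp Hl] -> /set2P[] vE.
    by subst u; rewrite uL in vL.
  subst w; exists u; split => //.
  by case/andP: Hp => /eqP -> /eqP ->.
apply/card_le1_eqP => f1 f2 /key[u1 [-> E1]] /key[u2 [-> E2]].
by have -> : u1 = u2 by apply: val_inj; rewrite /= E1 E2.
Qed.

Lemma M0_2m : is_2matching (tree_adj d h) M0.
Proof.
rewrite /is_2matching M0_sub /=; apply/forallP => v.
case vL: (v \in Lset); first by rewrite deg_in.
by rewrite (leq_trans (deg_out (negbT vL))).
Qed.

Lemma card_M0 : #|M0| = 2 * #|Lset|.
Proof.
rewrite -sum1_card.
under eq_bigr => f fM do rewrite -(edge_L (subsetP M0_sub f fM)).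
rewrite dcount mulnC -sum_nat_const; apply: eq_bigr => v vL; exact: deg_in.
Qed.

Lemma nu2_eq : nu2 (tree_adj d h) = 2 * #|Lset|.
Proof.
apply/eqP; rewrite eqn_leq; apply/andP; split.
  by apply/bigmax_leqP => M HM; exact: ub.
by rewrite -card_M0; apply: (leq_bigmax_cond (P := fun M => is_2matching (tree_adj d h) M)); exact: M0_2m.
Qed.
End Tree.

Theorem corollary5p5 (d h : nat) :
  3 <= d -> 3 <= h ->
  nu2 (tree_adj d h) = (2 * ((d - 1) ^ h - 1)) %/ (d - 2).
Proof.
move=> d3 _; rewrite nu2_eq // card_L ?(leq_trans _ d3) //.
rewrite [_ ^ h - 1]subn1 predn_exp -subn1 -subnDA mulnCA mulKn //.
by rewrite subn_gt0.
Qed.
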